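(* Let $n\geq 3$ be an integer and $p$ a prime with $\gcd(n,p(p-1))=1$. Let $F(x_1,\ldots,x_r)=a_1x_1^n+a_2x_2^n+\cdots+a_rx_r^n$ with $a_1,\ldots,a_r$ integers such that $r>\frac{n}{2}$, $a_1a_2\cdots a_r\neq 0$, and $\nu_p(a_i)\not\equiv\nu_p(a_j)\pmod n$ for all $1\leq i<j\leq r$. Then $R(F)$ is dense in $\mathbb{Q}_p$.
   Context: For an integral form $F$ in $r$ variables, $R(F)=\{F(\overline{x})/F(\overline{y}):\overline{x},\overline{y}\in\mathbb{Z}^r,\ F(\overline{y})\neq 0\}$, viewed as a subset of the field $\mathbb{Q}_p$ of $p$-adic numbers with its $p$-adic topology. $\nu_p$ denotes the $p$-adic valuation. *)

(* Defs.v *)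
From mathcomp Require Import all_boot all_order all_algebra.
Set Implicit Arguments. Unset Strict Implicit. Unset Printing Implicit Defensive.
Import Order.TTheory GRing.Theory Num.Theory.
Local Open Scope ring_scope.

Definition padic_val (p : nat) (q : rat) : int :=
  (logn p `|numq q|%N)%:Z - (logn p `|denq q|%N)%:Z.

(* a and b are p-adically within p^(-k): |a - b|_p <= p^(-k),
   i.e. a = b or nu_p(a - b) >= k. *)
Definition padic_close (p : nat) (k : int) (a b : rat) : Prop :=
  a = b \/ (a != b /\ k <= padic_val p (a - b)).

Definition diag_form (r n : nat) (a : 'I_r -> int) (x : 'I_r -> int) : int :=
  \sum_(i < r) a i * x i ^+ n.

(* R(F) = { F(x)/F(y) : x, y in Z^r, F(y) <> 0 } as a subset of Q. *)
Definition ratio_set (r n : nat) (a : 'I_r -> int) (t : rat) : Prop :=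
  exists x y : 'I_r -> int,
    diag_form n a y != 0 /\ t = (diag_form n a x)%:~R / (diag_form n a y)%:~R.

(* A subset S of Q is dense in Q_p.  Since Q is dense in Q_p, this is
   equivalent to: every rational q can be approximated p-adically to any
   precision by elements of S. *)
Definition dense_in_Qp (p : nat) (S : rat -> Prop) : Prop :=
  forall (q : rat) (k : int), exists t, S t /\ padic_close p k t q.

(* Main.v *)
Require Import Defs.
From mathcomp Require Import all_boot all_order all_algebra all_fingroup all_solvable.
From mathcomp Require Import zify ring lra.
Import Order.TTheory GRing.Theory Num.Theory.
Local Open Scope ring_scope.


Lemma val_bound p (t : rat) (P Q B : int) (N1 N2 : nat) : prime p -> P != 0 -> B != 0 ->
  ~~ (p %| `|B|)%N -> (p ^ N1 %| `|P|)%N -> Q = B * (p ^ N2)%:Z ->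
  t = P%:~R / Q%:~R -> N1%:Z - N2%:Z <= padic_val p t.
Proof.
move=> pp P0 B0 pB dP QE tE.
have p0 : (0 < p)%N by apply: prime_gt0.
have pN0 : (p ^ N2)%:Z != 0 by rewrite eqz_nat -lt0n expn_gt0 p0.
have Q0 : Q != 0 by rewrite QE mulf_neq0.
have key : numq t * Q = P * denq t.
  apply: (@intr_inj rat).
  rewrite !rmorphM /=.
  have h : (numq t)%:~R / (denq t)%:~R = P%:~R / Q%:~R :> rat by rewrite divq_num_den.
  have Q0' : (Q%:~R : rat) != 0 by rewrite intr_eq0.
  have D0' : ((denq t)%:~R : rat) != 0 by rewrite intr_eq0 denq_neq0.
  by apply/eqP; rewrite -eqr_div // h.
have nt0 : numq t != 0.
  apply/eqP=> h; move: key; rewrite h mul0r => /esym/eqP; rewrite mulf_eq0 (negbTE P0) /=.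
  by rewrite (negbTE (denq_neq0 t)).
move/(congr1 (fun z : int => logn p `|z|%N)): key.
rewrite !abszM lognM ?absz_gt0 // ?denq_neq0 // lognM ?absz_gt0 // ?denq_neq0 //.
rewrite QE abszM lognM ?absz_gt0 //.
have -> : `|(p ^ N2)%:Z|%N = (p ^ N2)%N by [].
rewrite pfactorK // (@logn_coprime p `|B|); last by rewrite prime_coprime.
have : (N1 <= logn p `|P|)%N by rewrite -pfactor_dvdn // absz_gt0.
rewrite /padic_val; lia.
Qed.

Lemma decomp p (z : int) : prime p -> z != 0 ->
  exists Z : int, z = Z * (p ^ logn p `|z|)%N%:Z /\ ~~ (p %| `|Z|)%N.
Proof.
move=> pp z0.
have z0' : (0 < `|z|)%N by rewrite absz_gt0.
have [m cm em] := pfactor_coprime pp z0'.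
exists ((-1) ^+ (z < 0)%R * m%:Z); split.
  by rewrite -mulrA -PoszM -em -intEsign.
rewrite -prime_coprime // abszM.
by case: (z < 0)%R; rewrite /= ?expr1 ?expr0 mul1n.
Qed.

Lemma power p n K : prime p -> coprime n (p * (p - 1)) ->
  exists d, forall z : int, ~~ (p %| `|z|)%N -> ((p ^ K)%N%:Z %| (z ^+ d) ^+ n - z)%Z.
Proof.
move=> pp cn.
have p0 : (0 < p)%N by apply: prime_gt0.
set T := totient (p ^ K.+1).
set M := (2 * T)%N.
have T0 : (0 < T)%N by rewrite totient_gt0 expn_gt0 p0.
have M1 : (1 < M)%N by rewrite /M; lia.
have cM : coprime n M.
  rewrite /M coprimeMr; apply/andP; split.
    apply: coprime_dvdr cn; rewrite dvdn2 oddM oddB // /=.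
    by case: (odd p).
  rewrite /T totient_pfactor // coprimeMr coprimeXr ?andbT.
    by move: cn; rewrite coprimeMr subn1 => /andP[].
  by move: cn; rewrite coprimeMr => /andP[].
pose d := (n ^ (totient M).-1)%N.
have dn : (d * n = n ^ totient M)%N.
  by rewrite /d -expnSr prednK // totient_gt0; lia.
have := Euler_exp_totient cM; rewrite (modn_small M1) => hE.
set t := (n ^ totient M %/ M)%N.
have edn : (d * n = t * M + 1)%N by rewrite dn {1}(divn_eq (n ^ totient M) M) hE.
exists d => z pz.
rewrite -exprM edn exprD expr1 mulnC /M -mulnA exprM.
set u := ((`|z| ^ 2) ^ (T * t))%N.
have e : (z ^+ 2) ^+ (T * t) = u%:Z.
  by rewrite /u -!abszX abszE ger0_norm // exprn_ge0 // sqr_ge0.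
have zz : (0 < `|z|)%N by rewrite lt0n; apply/eqP => z0; move: pz; rewrite z0 dvdn0.
have u1 : (1 <= u)%N by rewrite /u !expn_gt0 zz.
have hu : (p ^ K.+1 %| u - 1)%N.
  rewrite -eqn_mod_dvd // /u expnM -modnXm.
  rewrite Euler_exp_totient ?modnXm ?exp1n //.
  by rewrite coprimeXl // coprime_sym coprimeXl // prime_coprime.
have : ((p ^ K)%N %| u - 1)%N by apply: dvdn_trans hu; rewrite dvdn_exp2l.
rewrite e mulrC -{2}(mulr1 z) -mulrBr subzn // => h.
by apply: dvdz_mull; rewrite dvdzE.
Qed.

Lemma diag_single r n (a : 'I_r -> int) i c : (0 < n)%N ->
  diag_form n a (fun l => if l == i then c else 0) = a i * c ^+ n.
Proof.
move=> n0; rewrite /diag_form (bigD1 i) //= eqxx big1 ?addr0 // => l /negbTE ->.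
by rewrite expr0n gtn_eqF // mulr0.
Qed.

Lemma pigeon r n (f g : 'I_r -> nat) : (0 < n)%N -> (n < 2 * r)%N ->
  (forall i j, f i = f j %[mod n] -> i = j) ->
  (forall i j, g i = g j %[mod n] -> i = j) ->
  exists i j, f i = g j %[mod n].
Proof.
move=> n0 nr fi gi.
pose F i : 'I_n := Ordinal (ltn_pmod (f i) n0).
pose G i : 'I_n := Ordinal (ltn_pmod (g i) n0).
have Fi : injective F by move=> i j /(congr1 val) /= /fi.
have Gi : injective G by move=> i j /(congr1 val) /= /gi.
have cA := card_imset [set: 'I_r] Fi.
have cB := card_imset [set: 'I_r] Gi.
have cU := cardsUI (F @: [set: 'I_r]) (G @: [set: 'I_r]).
have cM : (#|F @: [set: 'I_r] :|: G @: [set: 'I_r]| <= n)%N.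
  by apply: leq_trans (max_card _) _; rewrite card_ord.
rewrite cA cB cardsT card_ord in cU.
have : (0 < #|F @: [set: 'I_r] :&: G @: [set: 'I_r]|)%N by lia.
rewrite card_gt0 => /set0Pn [x]; rewrite inE => /andP[/imsetP[i _ ->] /imsetP[j _ /(congr1 val) /= e]].
by exists i, j.
Qed.

Lemma kbound (k : int) (E N2 : nat) : k <= (E + (`|k|%N + N2))%N%:Z - N2%:Z.
Proof. have : k <= `|k|%N by rewrite abszE ler_norm. lia. Qed.

Lemma PX (p k : nat) : (p ^ k)%N%:Z = (p%:Z) ^+ k.
Proof. by elim: k => // k IH; rewrite expnS exprS PoszM IH. Qed.

Theorem theorem1p3 (n p r : nat) (a : 'I_r -> int) :
  (3 <= n)%N -> prime p -> coprime n (p * (p - 1)) ->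
  (n < 2 * r)%N ->
  (forall i, a i != 0) ->
  (forall i j : 'I_r, i != j ->
     ~ (logn p `|a i|%N = logn p `|a j|%N %[mod n])) ->
  dense_in_Qp p (ratio_set n a).
Proof.
move=> n3 pp cn nr anz hv q k.
have n0 : (0 < n)%N by lia.
have p0 : (0 < p)%N by apply: prime_gt0.
have r0 : (0 < r)%N by lia.
pose i0 : 'I_r := Ordinal r0.
have [->|q0] := eqVneq q 0.
  exists 0; split; last by left.
  exists (fun _ => 0), (fun l => if l == i0 then 1 else 0).
  rewrite diag_single // expr1n mulr1 anz; split => //.
  by rewrite /diag_form big1 ?mul0r // => l _; rewrite expr0n gtn_eqF // mulr0.
have N0 : numq q != 0 by rewrite numq_eq0.
have D0 : denq q != 0 := denq_neq0 q.
have [N' [eN pN]] := decomp p _ pp N0.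
have [D' [eD pD]] := decomp p _ pp D0.
set g := logn p `|numq q|.
set dl := logn p `|denq q|.
pose al (l : 'I_r) := logn p `|a l|.
have [i [j hij]] : exists i j, (al i + dl = al j + g %[mod n])%N.
  apply: pigeon => // i' j' /eqP; rewrite eqn_modDr => /eqP h;
    case: (eqVneq i' j') => // /hv; rewrite /al; by [].
have [A [eA pA]] := decomp p _ pp (anz i).
have [B [eB pB]] := decomp p _ pp (anz j).
have nz : forall z : int, ~~ (p %| `|z|)%N -> z != 0.
  by move=> z; apply: contra => /eqP ->; rewrite dvdn0.
set s := (al i + dl)%N. set s' := (al j + g)%N.
pose e1 := (s' %/ n)%N. pose e2 := (s %/ n)%N.
pose E := (s + n * e1)%N.
have hE : (E = s' + n * e2)%N.
  have h1 := divn_eq s n. have h2 := divn_eq s' n.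
  rewrite /E /e1 /e2; move: hij; rewrite -/s -/s' => hij. 
  rewrite {1}h1 {2}h2 hij; lia.
pose N2 := (al j + n * e2 + dl)%N.
pose K := (`|k|%N + N2)%N.
have [d hd] := power p n K pp cn.
pose X := (N' * B) ^+ d. pose Y := (A * D') ^+ d.
pose cx := (p%:Z) ^+ e1 * X. pose cy := (p%:Z) ^+ e2 * Y.
pose x := fun l => if l == i then cx else 0.
pose y := fun l => if l == j then cy else 0.
have pNB : ~~ (p %| `|(N' * B)%R|)%N by rewrite abszM Euclid_dvdM // negb_or pN pB.
have pAD : ~~ (p %| `|(A * D')%R|)%N by rewrite abszM Euclid_dvdM // negb_or pA pD.
have pY : ~~ (p %| `|Y ^+ n|)%N by rewrite /Y !abszX !Euclid_dvdX // (negbTE pAD).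
pose Bq := B * Y ^+ n * D'.
have pBq : ~~ (p %| `|Bq|)%N by rewrite /Bq !abszM !Euclid_dvdM // !negb_or pB pY pD.
have Bq0 := nz _ pBq.
pose P := a i * cx ^+ n * denq q - numq q * (a j * cy ^+ n).
pose Q := a j * cy ^+ n * denq q.
have hQ : Q = Bq * (p ^ N2)%N%:Z.
  rewrite /Q /cy eB eD !PX /Bq /N2 exprMn -exprM mulnC !exprD /al /dl; ring.
have hP : P = (p%:Z) ^+ E * (A * D' * (X ^+ n - N' * B) - N' * B * (Y ^+ n - A * D')).
  rewrite /P /cx /cy eA eB eN eD !PX !exprMn -/dl -/g.
  have h1 : (p%:Z) ^+ al i * ((p%:Z) ^+ e1) ^+ n * (p%:Z) ^+ dl = (p%:Z) ^+ E.
    by rewrite -exprM -!exprD; congr (_ ^+ _); rewrite /E /s; lia.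
  have h2 : (p%:Z) ^+ g * (p%:Z) ^+ al j * ((p%:Z) ^+ e2) ^+ n = (p%:Z) ^+ E.
    by rewrite -exprM -!exprD; congr (_ ^+ _); rewrite hE /s'; lia.
  rewrite -/(al i) -/(al j) -/X -/Y.
  transitivity (A * D' * X ^+ n * ((p%:Z) ^+ al i * ((p%:Z) ^+ e1) ^+ n * (p%:Z) ^+ dl)
     - N' * B * Y ^+ n * ((p%:Z) ^+ g * (p%:Z) ^+ al j * ((p%:Z) ^+ e2) ^+ n)).
    ring.
  by rewrite h1 h2; ring.
pose t : rat := (diag_form n a x)%:~R / (diag_form n a y)%:~R.
have cy0 : a j * cy ^+ n != 0.
  rewrite /cy exprMn mulf_neq0 // mulf_neq0 // ?(nz _ pY) //.
  by rewrite -PX expf_neq0 // eqz_nat -lt0n expn_gt0 p0.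
have tq : t - q = P%:~R / Q%:~R.
  rewrite /t !diag_single // -{1}(divq_num_den q) /P /Q !intrM intrB !intrM.
  field.
  move: cy0; rewrite mulf_eq0 negb_or => /andP[h1 h2].
  by apply/and3P; split; rewrite intr_eq0 //; exact: D0.
exists t; split.
  by exists x, y; split => //; rewrite diag_single.
case: (eqVneq t q) => tqe; [by left | right; split => //].
have P0 : P != 0.
  by apply/eqP => P0; move: tqe; rewrite -subr_eq0 tq P0 mul0r eqxx.
have dPz : ((p ^ (E + K))%N%:Z %| P)%Z.
  rewrite hP PX exprD; apply: dvdz_mul; first by rewrite dvdzz.
  rewrite -PX; apply: rpredB; apply: dvdz_mull; exact: hd.
have dP : (p ^ (E + K) %| `|P|)%N by move: dPz; rewrite dvdzE.
have vb := val_bound p (t - q) P Q Bq (E + K) N2 pp P0 Bq0 pBq dP hQ tq.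
by apply: le_trans vb; apply: kbound.
Qed.
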